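(* Let $G=(g_1,\dots,g_k)\in\mathbb{N}_0^k$ be telescopic with $g_1>0$ and $c(G)=(c_2,\dots,c_k)$, and let $1\le n\le m\le k$. Suppose $g_n$ is an $\mathbb{N}_0$-linear combination of the entries $g_i$ with $1\le i\le m$, $i\ne n$. Then either $g_n$ is an $\mathbb{N}_0$-linear combination of the entries $g_i$ with $1\le i\le m-1$, $i\ne n$, or $g_n=c_mg_m$.
   Context: $G_i=(g_1,\dots,g_i)$, $d_i=\gcd(G_i)$, $c_j=d_{j-1}/d_j$; $G$ is telescopic if $c_jg_j$ is an $\mathbb{N}_0$-linear combination of $g_1,\dots,g_{j-1}$ for all $2\le j\le k$. An empty $\mathbb{N}_0$-linear combination equals $0$. *)

(* Defs.v *)
From mathcomp Require Import all_boot.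
Set Implicit Arguments. Unset Strict Implicit. Unset Printing Implicit Defensive.

(* The sequence G = (g_1,...,g_k) is modelled by g : nat -> nat, using the
   values g 1, ..., g k (values outside 1..k are irrelevant). *)

(* d_i = gcd(g_1,...,g_i), with d_0 = gcd of the empty tuple = 0. *)
Definition dG (g : nat -> nat) (i : nat) : nat := \big[gcdn/0]_(1 <= j < i.+1) g j.

Definition cG (g : nat -> nat) (j : nat) : nat := dG g j.-1 %/ dG g j.

Definition N0comb (g : nat -> nat) (m : nat) (P : pred nat) (x : nat) : Prop :=
  exists a : nat -> nat, x = \sum_(1 <= i < m.+1 | P i) a i * g i.

Definition telescopic (k : nat) (g : nat -> nat) : Prop :=
  forall j, 2 <= j <= k -> N0comb g j.-1 predT (cG g j * g j).

(* Main.v *)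
Require Import Defs.
From mathcomp Require Import all_boot.
From mathcomp Require Import zify.

Lemma dG_rec g i : 0 < i -> dG g i = gcdn (dG g i.-1) (g i).
Proof. by case: i => // i _; rewrite /dG big_nat_recr. Qed.

Lemma dG_dvd g i j : 1 <= j <= i -> dG g i %| g j.
Proof.
elim: i => [|i IH] /andP [h1 h2]; first by lia.
rewrite dG_rec //=.
case: (ltnP j i.+1) => hj.
  apply: dvdn_trans (dvdn_gcdl _ _) _; apply: IH; lia.
have -> : j = i.+1 by lia.
exact: dvdn_gcdr.
Qed.

Lemma dG_pos g i : 0 < g 1 -> 0 < i -> 0 < dG g i.
Proof.
move=> g1 hi; have := @dG_dvd g i 1; rewrite hi => /(_ isT).
case: (dG g i) => //; rewrite dvd0n => /eqP; lia.
Qed.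

Lemma cdiv D e a : 0 < gcdn D e -> D %| a * e -> D %/ gcdn D e %| a.
Proof.
move=> dpos.
set d := gcdn D e.
have hD : D = (D %/ d) * d by rewrite divnK // dvdn_gcdl.
have he : e = (e %/ d) * d by rewrite divnK // dvdn_gcdr.
have cop : coprime (D %/ d) (e %/ d).
  have : d = gcdn (D %/ d) (e %/ d) * d by rewrite muln_gcdl -hD -he.
  rewrite /coprime => h; apply/eqP.
  have : 1 * d = gcdn (D %/ d) (e %/ d) * d by rewrite mul1n.
  by move/eqP; rewrite eqn_pmul2r // eq_sym => /eqP.
rewrite {1}hD he mulnA dvdn_pmul2r //.
by rewrite Gauss_dvdl.
Qed.

Lemma split_n (F : nat -> nat) n m : 1 <= n < m ->
  \sum_(1 <= i < m) F i = F n + \sum_(1 <= i < m | i != n) F i.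
Proof.
move=> h; rewrite (bigD1_seq n) //=.
  by rewrite mem_iota; lia.
exact: iota_uniq.
Qed.

Theorem mainTheorem19 (k : nat) (g : nat -> nat) (n m : nat) :
  telescopic k g -> 0 < g 1 ->
  1 <= n -> n <= m -> m <= k ->
  N0comb g m (fun i => i != n) (g n) ->
  N0comb g m.-1 (fun i => i != n) (g n) \/ g n = cG g m * g m.
Proof.
move=> tel g1 hn hnm hmk [a ha].
have m1 : m.-1.+1 = m by lia.
case: (ltnP n m) => hnm'; last first.
  have e : n = m by lia.
  left; exists a; rewrite ha m1 -e big_mkcond [RHS]big_mkcond big_nat_recr /=;
    [by rewrite eqxx addn0|lia].
have hm := tel m (ltac:(lia)).
case: hm => b hb.
rewrite m1 in hb.
set S := fun x : nat -> nat => \sum_(1 <= i < m | i != n) x i * g i.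
have haS : g n = S a + a m * g m.
  rewrite ha /S big_mkcond big_nat_recr /=; last lia.
  have -> : (m != n) = true by apply/eqP; lia.
  by rewrite -big_mkcond.
have hbS : cG g m * g m = b n * g n + S b.
  by rewrite hb (@split_n (fun i => b i * g i) n m) //; lia.
have dpos : 0 < gcdn (dG g m.-1) (g m).
  rewrite -dG_rec; [apply: dG_pos|]; lia.
have hdiv : cG g m %| a m.
  rewrite /cG (@dG_rec g m); last lia.
  apply: cdiv => //.
  have h1 : dG g m.-1 %| g n by apply: dG_dvd; lia.
  have h2 : dG g m.-1 %| S a.
    rewrite /S big_seq_cond; apply: dvdn_sum => i /andP [hi _]; apply: dvdn_mull; apply: dG_dvd.
    move: hi; rewrite mem_index_iota; lia.
  by rewrite haS (dvdn_addr _ h2) in h1.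
case/dvdnP: hdiv => q hq.
set c := cG g m in hq hbS.
have key : g n = S (fun i => a i + q * b i) + q * b n * g n.
  have -> : S (fun i => a i + q * b i) = S a + q * S b.
    rewrite /S big_distrr -big_split /=; apply: eq_bigr => i _; lia.
  rewrite haS hq -mulnA hbS; lia.
case: (posnP (q * b n * g n)) => hz.
  left; exists (fun i => a i + q * b i); rewrite m1.
  by rewrite [LHS]key hz addn0.
right.
have hS0 : S a <= S (fun i => a i + q * b i).
  by apply: leq_sum => i _; apply: leq_mul => //; lia.
have hgn : 0 < g n by move: hz; rewrite muln_gt0; case/andP.
have hqb : 0 < q * b n by move: hz; rewrite muln_gt0; case/andP.
set X := S (fun i => a i + q * b i) in key hS0.
have hX : X = 0 /\ q * b n = 1 by nia.
case: hX => hX0 hqb1.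
have q1 : q = 1 by move: hqb1 => /eqP; rewrite muln_eq1 => /andP [/eqP].
rewrite haS hq q1 mul1n. lia.
Qed.
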